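(* Let $K$ be a field and $s\in K$ with $s\ne0$, $s\ne\pm1$, and $s\ne t^2$ for all $t\in K$. Let $a=\begin{pmatrix}1&0\\0&s\end{pmatrix}$, $b=\begin{pmatrix}0&1\\1&0\end{pmatrix}$ and $V=Ka+Kb\subseteq M_2(K)$. Then: (i) $V$ is a maximal Mathieu subspace of $M_2(K)$; (ii) $V$ contains no nonzero nilpotent element (so it is not of the form $F(\lambda_1e_1+\lambda_2e_2)+e_1M_2e_2$ with $e_1,e_2$ nonzero idempotents summing to $I_2$, nor contained in the trace-zero matrices); (iii) if $L\supseteq K$ is a field containing a square root $\sqrt s$ of $s$, then $U=La+Lb\subseteq M_2(L)$ contains the nonzero idempotent $\frac1{1+s}(a+\sqrt s\,b)$ and hence is not a Mathieu subspace of $M_2(L)$.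
   Context: Let $\mathcal A$ be an associative algebra over a field $F$. An $F$-subspace $M\subseteq\mathcal A$ is a Mathieu subspace (MS) of $\mathcal A$ if for all $a,b,c\in\mathcal A$ such that $a^m\in M$ for all $m\ge 1$, there exists $N$ (depending on $a,b,c$) such that $ba^mc\in M$ for all $m\ge N$. A maximal MS of $\mathcal A$ is a proper MS of $\mathcal A$ that is not properly contained in any proper MS of $\mathcal A$. *)

(* Defs.v *)
From HB Require Import structures.
From mathcomp Require Import all_boot all_order all_algebra.
Set Implicit Arguments. Unset Strict Implicit. Unset Printing Implicit Defensive.
Import Order.TTheory GRing.Theory Num.Theory.
Local Open Scope ring_scope.

Definition is_subspace (F : fieldType) (A : lmodType F) (M : A -> Prop) : Prop :=
  M 0 /\ forall (c : F) (x y : A), M x -> M y -> M (c *: x + y).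

Definition mathieu_subspace (F : fieldType) (A : algType F) (M : A -> Prop) : Prop :=
  is_subspace M /\
  forall a b c : A, (forall m : nat, (1 <= m)%N -> M (a ^+ m)) ->
    exists N : nat, forall m : nat, (N <= m)%N -> M (b * a ^+ m * c).

Definition proper_sub (F : fieldType) (A : algType F) (M : A -> Prop) : Prop :=
  exists x : A, ~ M x.

Definition maximal_mathieu_subspace (F : fieldType) (A : algType F) (M : A -> Prop) : Prop :=
  mathieu_subspace M /\ proper_sub M /\
  forall M' : A -> Prop, mathieu_subspace M' -> proper_sub M' ->
    (forall x, M x -> M' x) -> forall x, M' x -> M x.

Definition mxa (K : fieldType) (s : K) : 'M[K]_2 :=
  \matrix_(i < 2, j < 2) (if i == j then (if (i : nat) == 0%N then 1 else s) else 0).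
Definition mxb (K : fieldType) : 'M[K]_2 :=
  \matrix_(i < 2, j < 2) (if i == j then 0 else 1).

Definition span2 (K : fieldType) (a b : 'M[K]_2) (x : 'M[K]_2) : Prop :=
  exists alpha beta : K, x = alpha *: a + beta *: b.

(* Main.v *)
Require Import Defs.
From HB Require Import structures.
From mathcomp Require Import all_boot all_order all_algebra.
From mathcomp Require Import ring.
From Stdlib Require Import Classical_Prop.
Set Implicit Arguments. Unset Strict Implicit.
Import GRing.Theory.
Local Open Scope ring_scope.

Section MK2.
Variable R : comNzRingType.

Definition mk2 (a b c d : R) : 'M[R]_2 :=
  \matrix_(i < 2, j < 2) if (i : nat) == 0%N then (if (j : nat) == 0%N then a else b)
                         else (if (j : nat) == 0%N then c else d).

Lemma ord2_cases (i : 'I_2) : i = ord0 \/ i = ord_max.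
Proof. case: i => [[|[|n]] Hn]; [left|right|by []]; exact/val_inj. Qed.

Lemma mk2_eta (M : 'M[R]_2) :
  M = mk2 (M ord0 ord0) (M ord0 ord_max) (M ord_max ord0) (M ord_max ord_max).
Proof.
apply/matrixP => i j; rewrite !mxE.
by case: (ord2_cases i) => ->; case: (ord2_cases j) => ->.
Qed.

Lemma mk2_mul a b c d a' b' c' d' :
  mk2 a b c d * mk2 a' b' c' d' =
  mk2 (a * a' + b * c') (a * b' + b * d') (c * a' + d * c') (c * b' + d * d').
Proof.
apply/matrixP => i j; rewrite !mxE !big_ord_recl big_ord0 !mxE.
by case: (ord2_cases i) => ->; case: (ord2_cases j) => ->; rewrite /= addr0.
Qed.

Lemma mk2_add a b c d a' b' c' d' :
  mk2 a b c d + mk2 a' b' c' d' = mk2 (a + a') (b + b') (c + c') (d + d').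
Proof.
apply/matrixP => i j; rewrite !mxE.
by case: (ord2_cases i) => ->; case: (ord2_cases j) => ->.
Qed.

Lemma mk2_scale k a b c d : k *: mk2 a b c d = mk2 (k * a) (k * b) (k * c) (k * d).
Proof.
apply/matrixP => i j; rewrite !mxE.
by case: (ord2_cases i) => ->; case: (ord2_cases j) => ->.
Qed.

Lemma mk2_0 : (0 : 'M[R]_2) = mk2 0 0 0 0.
Proof.
apply/matrixP => i j; rewrite !mxE.
by case: (ord2_cases i) => ->; case: (ord2_cases j) => ->.
Qed.

Lemma mk2_1 : (1 : 'M[R]_2) = mk2 1 0 0 1.
Proof.
apply/matrixP => i j; rewrite !mxE.
by case: (ord2_cases i) => ->; case: (ord2_cases j) => ->.
Qed.

Lemma mk2_inj a b c d a' b' c' d' : mk2 a b c d = mk2 a' b' c' d' ->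
  [/\ a = a', b = b', c = c' & d = d'].
Proof.
move=> H.
have E := fun i j => congr1 (fun M : 'M[R]_2 => M i j) H.
move: (E ord0 ord0) (E ord0 ord_max) (E ord_max ord0) (E ord_max ord_max).
by rewrite !mxE /=.
Qed.

Lemma mk2_det a b c d : \det (mk2 a b c d) = a * d - b * c.
Proof.
rewrite (expand_det_row _ ord0) !big_ord_recl big_ord0 /cofactor !det_mx11 !mxE /=.
rewrite /bump /= expr0 expr1 addr0. ring.
Qed.

Lemma mk2_tr a b c d : \tr (mk2 a b c d) = a + d.
Proof. by rewrite /mxtrace !big_ord_recl big_ord0 !mxE /= addr0. Qed.
End MK2.

Lemma mxa_mk2 (K : fieldType) (s : K) : mxa s = mk2 1 0 0 s.
Proof.
apply/matrixP => i j; rewrite !mxE.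
by case: (ord2_cases i) => ->; case: (ord2_cases j) => ->.
Qed.
Lemma mxb_mk2 (K : fieldType) : mxb K = mk2 0 1 1 0.
Proof.
apply/matrixP => i j; rewrite !mxE.
by case: (ord2_cases i) => ->; case: (ord2_cases j) => ->.
Qed.
Lemma map_mk2 (K L : fieldType) (f : {rmorphism K -> L}) a b c d :
  map_mx f (mk2 a b c d) = mk2 (f a) (f b) (f c) (f d).
Proof.
apply/matrixP => i j; rewrite !mxE.
by case: (ord2_cases i) => ->; case: (ord2_cases j) => ->.
Qed.

Lemma span2E (F : fieldType) (s : F) x :
  span2 (mk2 1 0 0 s) (mk2 0 1 1 0) x <-> exists al be, x = mk2 al be be (al * s).
Proof.
rewrite /span2; split => [[al [be ->]]|[al [be ->]]]; exists al, be;
  rewrite !mk2_scale mk2_add; congr mk2; ring.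
Qed.

Lemma span2_sub (F : fieldType) (A B : 'M[F]_2) : is_subspace (span2 A B).
Proof.
split; first by exists 0, 0; rewrite !scale0r addr0.
move=> c x y [al [be ->]] [al' [be' ->]].
exists (c * al + al'), (c * be + be').
by rewrite scalerDr !scalerA !scalerDl addrACA.
Qed.

Lemma sq_lemma (K : fieldType) (s : K) (hsq : forall t : K, t ^+ 2 != s) al be :
  be ^+ 2 = al ^+ 2 * s -> al = 0 /\ be = 0.
Proof.
case: (eqVneq al 0) => [->|ha] H.
  split => //; move/eqP: H; rewrite expr0n mul0r expf_eq0 /=; by move/eqP.
exfalso; have := hsq (be / al); rewrite exprMn exprVn H mulrAC mulfV ?mul1r ?eqxx //.
by rewrite expf_neq0.
Qed.

Lemma x2_lemma (K : fieldType) (s : K) (hs1 : s != 1) (hsq : forall t : K, t ^+ 2 != s) x :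
  span2 (mk2 1 0 0 s) (mk2 0 1 1 0) x -> span2 (mk2 1 0 0 s) (mk2 0 1 1 0) (x * x) -> x = 0.
Proof.
move=> /span2E [al [be ->]] /span2E [al' [be' ]].
rewrite mk2_mul => /mk2_inj [H1 H2 H3 H4].
have E : (s - 1) * (be ^+ 2 - al ^+ 2 * s) = 0.
  transitivity ((al * al + be * be) * s - (be * be + al * s * (al * s))); first ring.
  by rewrite H1 H4; ring.
move/eqP: E; rewrite mulf_eq0 subr_eq0 (negbTE hs1) /= subr_eq0 => /eqP E.
have [-> ->] := sq_lemma hsq E.
by rewrite mul0r mk2_0.
Qed.

Lemma detX2 (K : fieldType) (x : 'M[K]_2) n : \det (x ^+ n) = \det x ^+ n.
Proof.
elim: n => [|n IH]; first by rewrite !expr0 det1.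
by rewrite !exprS detM IH.
Qed.

Lemma nil_lemma (K : fieldType) (s : K) (hsq : forall t : K, t ^+ 2 != s) x n :
  span2 (mk2 1 0 0 s) (mk2 0 1 1 0) x -> x ^+ n = 0 -> x = 0.
Proof.
move=> /span2E [al [be ->]] Hn.
have : \det (mk2 al be be (al * s)) ^+ n = 0 by rewrite -detX2 Hn det0.
move/eqP; rewrite expf_eq0 mk2_det => /andP [_ /eqP E].
have E' : be ^+ 2 = al ^+ 2 * s.
  apply/eqP; rewrite -subr_eq0 -oppr_eq0; apply/eqP; rewrite -E; ring.
have [-> ->] := sq_lemma hsq E'.
by rewrite mul0r mk2_0.
Qed.

Lemma nz_reach (F : fieldType) (e : 'M[F]_2) : e != 0 ->
  exists y0 w0, y0 * e * w0 = mk2 1 0 0 0.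
Proof.
rewrite (mk2_eta e).
move: (e ord0 ord0) (e ord0 ord_max) (e ord_max ord0) (e ord_max ord_max) => e1 e2 e3 e4 enz.
case: (eqVneq e1 0) => h1.
case: (eqVneq e2 0) => h2.
case: (eqVneq e3 0) => h3.
case: (eqVneq e4 0) => h4.
- by move: enz; rewrite h1 h2 h3 h4 -mk2_0 eqxx.
- exists (mk2 0 e4^-1 0 0), (mk2 0 0 1 0); rewrite !mk2_mul; congr mk2; by field; rewrite ?h4.
- exists (mk2 0 e3^-1 0 0), (mk2 1 0 0 0); rewrite !mk2_mul; congr mk2; by field; rewrite ?h3.
- exists (mk2 e2^-1 0 0 0), (mk2 0 0 1 0); rewrite !mk2_mul; congr mk2; by field; rewrite ?h2.
- exists (mk2 e1^-1 0 0 0), (mk2 1 0 0 0); rewrite !mk2_mul; congr mk2; by field; rewrite ?h1.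
Qed.

Lemma Meq (T : Type) (M : T -> Prop) x y : M x -> x = y -> M y.
Proof. by move=> H <-. Qed.

Lemma idem_all (F : fieldType) (M : 'M[F]_2 -> Prop) (e : 'M[F]_2) :
  mathieu_subspace M -> M e -> e * e = e -> e != 0 -> forall z, M z.
Proof.
move=> [[M0 Mc] Mms] Me ee enz z.
have pow : forall m, (1 <= m)%N -> e ^+ m = e.
  elim=> [//|m IH] _; case: m IH => [|m] IH; first by rewrite expr1.
  by rewrite exprS IH.
have Myw : forall y w, M (y * e * w).
  move=> y w; have [N HN] := Mms e y w (fun m hm => eq_ind_r M Me (pow m hm)).
  by have := HN N.+1 (leqnSn N); rewrite pow.
have [y0 [w0 H]] := nz_reach enz.
have Hz := Mc 1 _ _ (Myw (mk2 (z ord0 ord0) 0 (z ord_max ord0) 0 * y0) (w0 * mk2 1 0 0 0))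
                    (Myw (mk2 (z ord0 ord_max) 0 (z ord_max ord_max) 0 * y0) (w0 * mk2 0 1 0 0)).
suff -> : z = mk2 (z ord0 ord0) 0 (z ord_max ord0) 0 * (y0 * e * w0) * mk2 1 0 0 0 +
     mk2 (z ord0 ord_max) 0 (z ord_max ord_max) 0 * (y0 * e * w0) * mk2 0 1 0 0.
  by move: Hz; rewrite scale1r !mulrA.
rewrite H !mk2_mul mk2_add {1}(mk2_eta z); congr mk2; ring.
Qed.

Lemma maximal_part (K : fieldType) (s : K) (hs0 : s != 0) (hsm1 : s != -1)
  (M : 'M[K]_2 -> Prop) :
  mathieu_subspace M -> Defs.proper_sub M ->
  (forall x, span2 (mk2 1 0 0 s) (mk2 0 1 1 0) x -> M x) ->
  forall x, M x -> span2 (mk2 1 0 0 s) (mk2 0 1 1 0) x.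
Proof.
move=> HM [z nz] HVM x Mx.
case: (Classical_Prop.classic (span2 (mk2 1 0 0 s) (mk2 0 1 1 0) x)) => // nVx.
exfalso; apply: nz.
have [[M0 Mc] _] := HM.
have Ma : M (mk2 1 0 0 s) by apply: HVM; apply/span2E; exists 1, 0; congr mk2; ring.
have Mb : M (mk2 0 1 1 0) by apply: HVM; apply/span2E; exists 0, 1; congr mk2; ring.
have Msc : forall k y, M y -> M (k *: y) by move=> k y My; have := Mc k y 0 My M0; rewrite addr0.
have [p [q [My Hpq]]] : exists p q, M (mk2 0 0 p q) /\ (p != 0 \/ q != 0).
  move: Mx nVx; rewrite (mk2_eta x).
  move: (x ord0 ord0) (x ord0 ord_max) (x ord_max ord0) (x ord_max ord_max) => x1 x2 x3 x4 Mx nVx.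
  exists (x3 - x2), (x4 - x1 * s); split.
    have Hv : M (x1 *: mk2 1 0 0 s + x2 *: mk2 0 1 1 0).
      by apply: HVM; exists x1, x2.
    apply: (Meq (Mc (-1) _ _ Hv Mx)); rewrite !(mk2_scale, mk2_add).
    by congr mk2; ring.
  case: (eqVneq (x3 - x2) 0) => hp; last by left.
  case: (eqVneq (x4 - x1 * s) 0) => hq; last by right.
  exfalso; apply: nVx; apply/span2E; exists x1, x2.
  move/eqP: hp; rewrite subr_eq0 => /eqP ->.
  by move/eqP: hq; rewrite subr_eq0 => /eqP ->.
case: (eqVneq q 0) => hq.
- subst q; case: Hpq => [hp|]; last by rewrite eqxx.
  have hs1 : 1 + s != 0.
    by apply: contra hsm1; rewrite addrC addr_eq0 => /eqP ->.
  pose al := (1 + s)^-1.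
  apply: (@idem_all _ _ (mk2 al 1 (1 + (al ^+ 2 * s - 1)) (al * s))) => //.
  + apply: (Meq (Mc al _ _ Ma (Mc 1 _ _ Mb (Msc ((al ^+ 2 * s - 1) / p) _ My)))).
    rewrite !(mk2_scale, mk2_add); congr mk2; rewrite /al; by field; rewrite ?hs1 ?hp ?hq.
  + rewrite mk2_mul; congr mk2; rewrite /al; by field; rewrite ?hs1 ?hp ?hq.
  + apply/eqP; rewrite mk2_0 => /mk2_inj [_ H _ _]; move: H; apply/eqP; exact: oner_neq0.
- apply: (@idem_all _ _ (mk2 0 0 (p / q) 1)) => //.
  + apply: (Meq (Msc q^-1 _ My)); rewrite mk2_scale; congr mk2; rewrite ?mulr0 //; by field; rewrite ?hs1 ?hp ?hq.
  + rewrite mk2_mul; congr mk2; by field; rewrite ?hs1 ?hp ?hq.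
  + apply/eqP; rewrite mk2_0 => /mk2_inj [_ _ _ H]; move: H; apply/eqP; exact: oner_neq0.
Qed.

Lemma idem_pow (F : fieldType) (e : 'M[F]_2) : e * e = e -> forall m, (1 <= m)%N -> e ^+ m = e.
Proof.
move=> ee; elim=> [//|m IH] _; case: m IH => [|m] IH; first by rewrite expr1.
by rewrite exprS IH.
Qed.

Theorem mainTheorem12 (K : fieldType) (s : K)
  (hs0 : s != 0) (hs1 : s != 1) (hsm1 : s != -1)
  (hsq : forall t : K, t ^+ 2 != s) :
  (* (i) *)
  maximal_mathieu_subspace (span2 (mxa s) (mxb K))
  (* (ii) *)
  /\ (forall x : 'M[K]_2, span2 (mxa s) (mxb K) x ->
        (exists n : nat, x ^+ n = 0) -> x = 0)
  /\ (forall (e1 e2 : 'M[K]_2) (l1 l2 : K),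
        e1 * e1 = e1 -> e2 * e2 = e2 -> e1 != 0 -> e2 != 0 -> e1 + e2 = 1 ->
        ~ (forall x : 'M[K]_2, span2 (mxa s) (mxb K) x <->
             exists (c : K) (y : 'M[K]_2), x = c *: (l1 *: e1 + l2 *: e2) + e1 * y * e2))
  /\ (exists x : 'M[K]_2, span2 (mxa s) (mxb K) x /\ \tr x != 0)
  (* (iii) *)
  /\ (forall (L : fieldType) (f : {rmorphism K -> L}) (r : L), r ^+ 2 = f s ->
        let aL := map_mx f (mxa s) in
        let bL := map_mx f (mxb K) in
        let e := (1 + f s)^-1 *: (aL + r *: bL) in
        span2 aL bL e /\ e != 0 /\ e * e = e
        /\ ~ mathieu_subspace (span2 aL bL)).
Proof.
have hs1' : 1 + s != 0.
  by apply: contra hsm1; rewrite addrC addr_eq0 => /eqP ->.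
split.
  rewrite mxa_mk2 mxb_mk2; split.
    split; first exact: span2_sub.
    move=> x y w Hp; exists 1%N => m hm.
    have -> : x = 0.
      by apply: (x2_lemma hs1 hsq (Hp 1%N isT)); rewrite -expr2; apply: Hp.
    rewrite expr0n; case: m hm => // m _; rewrite mulr0 mul0r.
    by apply/span2E; exists 0, 0; rewrite mul0r mk2_0.
  split; last exact: maximal_part.
  exists 1; move/span2E => [al [be]]; rewrite mk2_1 => /mk2_inj [H1 _ _ H4].
  by move: hs1; rewrite H4 -H1 mul1r eqxx.
split.
  rewrite mxa_mk2 mxb_mk2 => x Hx [n Hn]; exact: (nil_lemma hsq Hx Hn).
split.
  rewrite mxa_mk2 mxb_mk2 => e1 e2 l1 l2 ee1 ee2 nz1 nz2 sum H.
  have e21 : e2 * e1 = 0.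
    have -> : e2 = 1 - e1 by rewrite -sum addrC addKr.
    by rewrite mulrBl mul1r ee1 subrr.
  have Z : forall y, e1 * y * e2 = 0.
    move=> y; apply: (@nil_lemma _ _ hsq _ 2).
      by apply/H; exists 0, y; rewrite scale0r add0r.
    rewrite expr2 -!mulrA (mulrA e2 e1) e21 mul0r.
    by rewrite !mulr0.
  have [y0 [w0 Hw]] := nz_reach nz1.
  have Z2 : forall y, mk2 1 0 0 0 * y * e2 = 0.
    move=> y; rewrite -Hw -!mulrA.
    by have := Z (w0 * y); rewrite -!mulrA => ->; rewrite mulr0.
  apply: (negP nz2).
  move: (Z2 1) (Z2 (mk2 0 1 0 0)); rewrite mulr1 (mk2_eta e2) !mk2_mul mk2_0.
  move=> /mk2_inj [E1 E2 _ _] /mk2_inj [E3 E4 _ _].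
  apply/eqP; congr mk2.
  - by rewrite -E1; ring.
  - by rewrite -E2; ring.
  - by rewrite -E3; ring.
  - by rewrite -E4; ring.
split.
  exists (mk2 1 0 0 s); rewrite mxa_mk2 mxb_mk2; split.
    by apply/span2E; exists 1, 0; congr mk2; ring.
  by rewrite mk2_tr.
move=> L f r hr aL bL e.
have hfs : 1 + f s != 0 by rewrite -(rmorph1 f) -rmorphD fmorph_eq0.
have hr0 : r != 0.
  apply: contra hs0 => /eqP r0; move: hr; rewrite r0 expr0n /= => /esym/eqP.
  by rewrite fmorph_eq0.
have EaL : aL = mk2 1 0 0 (f s) by rewrite /aL mxa_mk2 map_mk2 rmorph1 rmorph0.
have EbL : bL = mk2 0 1 1 0 by rewrite /bL mxb_mk2 map_mk2 rmorph1 rmorph0.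
have Ee : e = mk2 (1 + f s)^-1 ((1 + f s)^-1 * r) ((1 + f s)^-1 * r) ((1 + f s)^-1 * f s).
  rewrite /e EaL EbL !(mk2_scale, mk2_add); congr mk2; ring.
have ee : e * e = e.
  rewrite Ee mk2_mul; move: hfs; rewrite -hr => hfs'; congr mk2; by field; rewrite ?hfs'.
rewrite EaL EbL; split.
  by apply/span2E; rewrite Ee; exists (1 + f s)^-1, ((1 + f s)^-1 * r).
split.
  rewrite Ee; apply/eqP; rewrite mk2_0 => /mk2_inj [H _ _ _].
  by move/eqP: H; rewrite invr_eq0 (negbTE hfs).
split; first exact: ee.
move=> [_ Hms].
have Vpow : forall m, (0 < m)%N -> span2 (mk2 1 0 0 (f s)) (mk2 0 1 1 0) (e ^+ m).
  move=> m hm; rewrite idem_pow // Ee; apply/span2E.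
  by exists (1 + f s)^-1, ((1 + f s)^-1 * r).
have [N HN] := Hms e 1 (mk2 1 0 0 0) Vpow.
have := HN N.+1 (leqnSn N); rewrite idem_pow // mul1r Ee mk2_mul.
move/span2E => [al [be]] /mk2_inj [_ H2 H3 _].
move: H3; rewrite -H2 => /eqP; apply/negP.
by rewrite !mulr0 mulr1 !addr0 mulf_neq0 // invr_eq0.
Qed.
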